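(* There exists a class $\mathcal{J}$ (a formula with one free variable in the language $\{e,\vdash,\circ\}$) such that $\mathsf{Seq}\vdash\phi^{\mathcal{J}}$ for every axiom $\phi$ of $\mathsf{Seq}^*$. Furthermore, writing $x\preceq y$ for $\exists z\in\mathcal{J}\,[y=x\circ z]$, the theory $\mathsf{Seq}$ proves that $\preceq$ is reflexive and transitive, that $\forall y\in\mathcal{J}\,\forall x\,[x\preceq y\rightarrow x\in\mathcal{J}]$, and that $\forall w\,[e\vdash w\in\mathcal{J}]$.
   Context: $\mathsf{Seq}$ is the theory in the language $\{e,\vdash,\circ\}$ ($e$ constant, $\vdash$ and $\circ$ binary functions) with axioms: ($\mathsf{Seq}_1$) $\forall xy[x\vdash y\neq e]$; ($\mathsf{Seq}_2$) $\forall x_1x_2y_1y_2[x_1\vdash x_2=y_1\vdash y_2\rightarrow(x_1=y_1\wedge x_2=y_2)]$; ($\mathsf{Seq}_3$) $\forall x[x\circ e=x]$; ($\mathsf{Seq}_4$) $\forall xyz[x\circ(y\vdash z)=(x\circ y)\vdash z]$; ($\mathsf{Seq}_5$) $\forall x[x=e\vee\exists yz[x=y\vdash z]]$. $\mathsf{Seq}^*$ is the theory with axioms $\mathsf{Seq}_1$, $\mathsf{Seq}_2$, $\mathsf{Seq}_4$ and ($\mathsf{Seq}^*_3$) $\forall x[x\circ e=x\wedge e\circ x=x]$, ($\mathsf{Seq}^*_5$) $\forall xyzw[x\circ y=z\circ w\leftrightarrow\exists u[(z=x\circ u\wedge u\circ w=y)\vee(x=z\circ u\wedge u\circ y=w)]]$.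 For a class $K$ and formula $\phi$, the relativization $\phi^K$ is defined by: $\phi^K=\phi$ for atomic $\phi$, commuting with propositional connectives, $(\forall x\phi)^K=\forall x[K(x)\rightarrow\phi^K]$, $(\exists x\phi)^K=\exists x[K(x)\wedge\phi^K]$. $x\in K$ means $K(x)$. *)

(* Defs.v *)
From Stdlib Require Import Arith.

Inductive term : Type :=
| tvar : nat -> term
| te : term
| tturn : term -> term -> term
| tcirc : term -> term -> term.

Inductive form : Type :=
| feq : term -> term -> form
| ffalse : form
| fneg : form -> form
| fand : form -> form -> form
| f_or : form -> form -> form
| fimp : form -> form -> form
| fiff : form -> form -> form
| fall : form -> form   (* binds de Bruijn variable 0 *)
| fex : form -> form.

Record structure : Type := {
  dom : Type;
  ie : dom;
  iturn : dom -> dom -> dom;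
  icirc : dom -> dom -> dom }.

Definition scons {A : Type} (a : A) (rho : nat -> A) : nat -> A :=
  fun n => match n with 0 => a | S k => rho k end.

Fixpoint eval (M : structure) (rho : nat -> dom M) (t : term) : dom M :=
  match t with
  | tvar n => rho n
  | te => ie M
  | tturn a b => iturn M (eval M rho a) (eval M rho b)
  | tcirc a b => icirc M (eval M rho a) (eval M rho b)
  end.

Fixpoint sat (M : structure) (rho : nat -> dom M) (f : form) : Prop :=
  match f with
  | feq a b => eval M rho a = eval M rho b
  | ffalse => False
  | fneg g => ~ sat M rho g
  | fand g h => sat M rho g /\ sat M rho h
  | f_or g h => sat M rho g \/ sat M rho h
  | fimp g h => sat M rho g -> sat M rho h
  | fiff g h => (sat M rho g <-> sat M rho h)
  | fall g => forall d : dom M, sat M (scons d rho) g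
  | fex g => exists d : dom M, sat M (scons d rho) g
  end.

Fixpoint tbounded (n : nat) (t : term) : Prop :=
  match t with
  | tvar k => k < n
  | te => True
  | tturn a b | tcirc a b => tbounded n a /\ tbounded n b
  end.

Fixpoint fbounded (n : nat) (f : form) : Prop :=
  match f with
  | feq a b => tbounded n a /\ tbounded n b
  | ffalse => True
  | fneg g => fbounded n g
  | fand g h | f_or g h | fimp g h | fiff g h => fbounded n g /\ fbounded n h
  | fall g | fex g => fbounded (S n) g
  end.

(* Relativization phi^K to a class K, i.e. a formula whose only free variable
   is de Bruijn 0. Under a new binder the bound variable is index 0, so K is
   inserted unchanged. *)
Fixpoint rel (K : form) (f : form) : form :=
  match f with
  | feq a b => feq a b
  | ffalse => ffalse
  | fneg g => fneg (rel K g)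
  | fand g h => fand (rel K g) (rel K h)
  | f_or g h => f_or (rel K g) (rel K h)
  | fimp g h => fimp (rel K g) (rel K h)
  | fiff g h => fiff (rel K g) (rel K h)
  | fall g => fall (fimp K (rel K g))
  | fex g => fex (fand K (rel K g))
  end.

Notation v := tvar.

Definition Seq1 : form := fall (fall (fneg (feq (tturn (v 1) (v 0)) te))).
Definition Seq2 : form :=
  fall (fall (fall (fall
    (fimp (feq (tturn (v 3) (v 2)) (tturn (v 1) (v 0)))
          (fand (feq (v 3) (v 1)) (feq (v 2) (v 0))))))).
Definition Seq3 : form := fall (feq (tcirc (v 0) te) (v 0)).
Definition Seq4 : form :=
  fall (fall (fall
    (feq (tcirc (v 2) (tturn (v 1) (v 0))) (tturn (tcirc (v 2) (v 1)) (v 0))))).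
Definition Seq5 : form :=
  fall (f_or (feq (v 0) te) (fex (fex (feq (v 2) (tturn (v 1) (v 0)))))).

Definition Seq3s : form :=
  fall (fand (feq (tcirc (v 0) te) (v 0)) (feq (tcirc te (v 0)) (v 0))).
(* forall x y z w [x o y = z o w <-> exists u [(z = x o u /\ u o w = y)
                                               \/ (x = z o u /\ u o y = w)]] *)
Definition Seq5s : form :=
  fall (fall (fall (fall
    (fiff (feq (tcirc (v 3) (v 2)) (tcirc (v 1) (v 0)))
          (fex (f_or
             (fand (feq (v 2) (tcirc (v 4) (v 0))) (feq (tcirc (v 0) (v 1)) (v 3)))
             (fand (feq (v 4) (tcirc (v 2) (v 0))) (feq (tcirc (v 0) (v 3)) (v 1))))))))).

Definition Seq_axiom (phi : form) : Prop :=
  phi = Seq1 \/ phi = Seq2 \/ phi = Seq3 \/ phi = Seq4 \/ phi = Seq5.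

Definition SeqStar_axiom (phi : form) : Prop :=
  phi = Seq1 \/ phi = Seq2 \/ phi = Seq3s \/ phi = Seq4 \/ phi = Seq5s.

Definition model_of (T : form -> Prop) (M : structure) : Prop :=
  forall phi, T phi -> forall rho : nat -> dom M, sat M rho phi.

(* T |- phi, read semantically (equivalent by Goedel's completeness theorem):
   phi holds in every model of T under every assignment. *)
Definition proves (T : form -> Prop) (phi : form) : Prop :=
  forall M : structure, model_of T M -> forall rho : nat -> dom M, sat M rho phi.

Definition inK (M : structure) (K : form) (x : dom M) : Prop :=
  sat M (scons x (fun _ => x)) K.

Definition preceq (M : structure) (K : form) (x y : dom M) : Prop :=
  exists z, inK M K z /\ y = icirc M x z.

(* Main.v *)
Require Import Defs.

Fixpoint tlift (t : term) : term :=
  match t with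
  | tvar n => tvar (S n)
  | te => te
  | tturn a b => tturn (tlift a) (tlift b)
  | tcirc a b => tcirc (tlift a) (tlift b)
  end.

Lemma eval_tlift M rho d t : eval M (scons d rho) (tlift t) = eval M rho t.
Proof. induction t; simpl; congruence. Qed.

Lemma tbounded_lift n t : tbounded n t -> tbounded (S n) (tlift t).
Proof. induction t; simpl; intuition. Qed.

Definition Af (t : term) : form := feq (tcirc te t) t.
Definition Bf (t : term) : form :=
  fall (fall (feq (tcirc (tcirc (v 1) (v 0)) (tlift (tlift t)))
                  (tcirc (v 1) (tcirc (v 0) (tlift (tlift t)))))).
Definition Cf (t : term) : form :=
  let t3 := tlift (tlift (tlift t)) in
  let t4 := tlift t3 in
  fall (fall (fall (fimp (feq (tcirc (v 2) (v 1)) (tcirc (v 0) t3))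
    (fex (f_or
      (fand (feq (v 1) (tcirc (v 3) (v 0))) (feq (tcirc (v 0) t4) (v 2)))
      (fand (feq (v 3) (tcirc (v 1) (v 0))) (feq (tcirc (v 0) (v 2)) t4))))))).
Definition Qf (t : term) : form := fand (Af t) (fand (Bf t) (Cf t)).
Definition If (t : term) : form :=
  fand (Qf t) (fall (fimp (Qf (v 0)) (Qf (tcirc (v 0) (tlift t))))).
Definition Kf (t : term) : form :=
  fand (If t) (fall (fimp (If (tcirc (v 0) (tlift t))) (If (v 0)))).
Definition Jf : form := Kf (v 0).

Section Sem.
Variable M : structure.
Local Notation c := (icirc M).
Local Notation tt := (iturn M).
Local Notation e := (ie M).

Definition Qs (w : dom M) : Prop :=
  c e w = w /\ (forall x y, c (c x y) w = c x (c y w)) /\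
  (forall x y z, c x y = c z w -> exists u,
     (z = c x u /\ c u w = y) \/ (x = c z u /\ c u y = w)).
Definition Is (w : dom M) : Prop := Qs w /\ forall x, Qs x -> Qs (c x w).
Definition Ks (w : dom M) : Prop := Is w /\ forall u, Is (c u w) -> Is u.

Lemma Qf_sem rho t : sat M rho (Qf t) <-> Qs (eval M rho t).
Proof.
  unfold Qf, Af, Bf, Cf, Qs; simpl.
  repeat setoid_rewrite eval_tlift. reflexivity.
Qed.

Lemma If_sem rho t : sat M rho (If t) <-> Is (eval M rho t).
Proof.
  unfold If, Is; cbn [sat]. setoid_rewrite Qf_sem. cbn [eval tlift scons].
  setoid_rewrite eval_tlift. reflexivity.
Qed.

Lemma Kf_sem rho t : sat M rho (Kf t) <-> Ks (eval M rho t).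
Proof.
  unfold Kf, Ks; cbn [sat]. setoid_rewrite If_sem. cbn [eval tlift scons].
  setoid_rewrite eval_tlift. reflexivity.
Qed.

Lemma Jf_sem d rho : sat M (scons d rho) Jf <-> Ks d.
Proof. unfold Jf. rewrite Kf_sem. reflexivity. Qed.

Hypothesis S1 : forall x y, tt x y <> e.
Hypothesis S2 : forall a b c d, tt a b = tt c d -> a = c /\ b = d.
Hypothesis S3 : forall x, c x e = x.
Hypothesis S4 : forall x y z, c x (tt y z) = tt (c x y) z.
Hypothesis S5 : forall x, x = e \/ exists y z, x = tt y z.

Lemma Q_e : Qs e.
Proof.
  split; [|split].
  - apply S3.
  - intros; rewrite !S3; reflexivity.
  - intros x y z H. rewrite S3 in H. exists y. left. split; [auto|apply S3].
Qed.

Lemma Q_succ w a : Qs w -> Qs (tt w a).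
Proof.
  intros [HA [HB HC]]. split; [|split].
  - rewrite S4, HA; reflexivity.
  - intros; rewrite !S4, HB; reflexivity.
  - intros x y z H. destruct (S5 y) as [->|[y' [b ->]]].
    + exists (tt w a). right. rewrite S3 in H. split; [exact H | apply S3].
    + rewrite !S4 in H. apply S2 in H. destruct H as [H ->].
      destruct (HC _ _ _ H) as [u [[H1 H2]|[H1 H2]]]; exists u.
      * left. split; auto. rewrite S4, H2; reflexivity.
      * right. split; auto. rewrite S4, H2; reflexivity.
Qed.

Lemma Q_pred w a : Qs (tt w a) -> Qs w.
Proof.
  intros [HA [HB HC]]. split; [|split].
  - rewrite S4 in HA. apply S2 in HA. tauto.
  - intros x y. specialize (HB x y). rewrite !S4 in HB. apply S2 in HB. tauto.
  - intros x y z H.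
    assert (H' : c x (tt y a) = c z (tt w a)) by (rewrite !S4, H; reflexivity).
    destruct (HC _ _ _ H') as [u [[H1 H2]|[H1 H2]]]; exists u;
      rewrite S4 in H2; apply S2 in H2; destruct H2; [left|right]; auto.
Qed.

Lemma I_e : Is e.
Proof. split. apply Q_e. intros; rewrite S3; auto. Qed.

Lemma I_succ w a : Is w -> Is (tt w a).
Proof. intros [H1 H2]. split. apply Q_succ; auto. intros; rewrite S4; apply Q_succ; auto. Qed.

Lemma I_pred w a : Is (tt w a) -> Is w.
Proof.
  intros [H1 H2]. split. eapply Q_pred; eauto.
  intros x Hx. specialize (H2 x Hx). rewrite S4 in H2. eapply Q_pred; eauto.
Qed.

Lemma Q_assoc w : Qs w -> forall x y, c (c x y) w = c x (c y w).
Proof. intros [_ [HB _]]; exact HB. Qed.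

Lemma I_comp q z : Is q -> Is z -> Is (c q z).
Proof.
  intros [Hq1 Hq2] [Hz1 Hz2]. split. apply Hz2; auto.
  intros x Hx. rewrite <- (Q_assoc _ Hz1). apply Hz2. apply Hq2. auto.
Qed.

Lemma K_e : Ks e.
Proof. split. apply I_e. intros u; rewrite S3; auto. Qed.

Lemma K_succ w a : Ks w -> Ks (tt w a).
Proof.
  intros [H1 H2]. split. apply I_succ; auto.
  intros u Hu. rewrite S4 in Hu. apply H2. eapply I_pred; eauto.
Qed.

Lemma K_comp q z : Ks q -> Ks z -> Ks (c q z).
Proof.
  intros [Hq1 Hq2] [Hz1 Hz2]. split. apply I_comp; auto.
  intros u Hu. rewrite <- (Q_assoc _ (proj1 Hz1)) in Hu. auto.
Qed.

Lemma K_down x z : Ks (c x z) -> Ks z -> Ks x.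
Proof.
  intros [Hy1 Hy2] [Hz1 Hz2]. split. auto.
  intros u Hu. apply Hy2. rewrite <- (Q_assoc _ (proj1 Hz1)). apply I_comp; auto.
Qed.

Lemma K_Q w : Ks w -> Qs w.
Proof. intros [[H _] _]; exact H. Qed.

End Sem.

Section Ax.
Variable M : structure.
Hypothesis HM : model_of Seq_axiom M.
Let r : nat -> dom M := fun _ => ie M.

Lemma ax1 : forall x y, iturn M x y <> ie M.
Proof. intros x y. exact (HM Seq1 (or_introl eq_refl) r x y). Qed.
Lemma ax2 : forall a b c d, iturn M a b = iturn M c d -> a = c /\ b = d.
Proof. intros a b c d. exact (HM Seq2 (or_intror (or_introl eq_refl)) r a b c d). Qed.
Lemma ax3 : forall x, icirc M x (ie M) = x.
Proof. intros x. exact (HM Seq3 (or_intror (or_intror (or_introl eq_refl))) r x). Qed.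
Lemma ax4 : forall x y z, icirc M x (iturn M y z) = iturn M (icirc M x y) z.
Proof. intros x y z. exact (HM Seq4 (or_intror (or_intror (or_intror (or_introl eq_refl)))) r x y z). Qed.
Lemma ax5 : forall x, x = ie M \/ exists y z, x = iturn M y z.
Proof. intros x. exact (HM Seq5 (or_intror (or_intror (or_intror (or_intror eq_refl)))) r x). Qed.
End Ax.

Opaque Jf.

Theorem lemma5 :
  exists J : form,
    fbounded 1 J /\
    (forall phi, SeqStar_axiom phi -> proves Seq_axiom (rel J phi)) /\
    (forall M : structure, model_of Seq_axiom M ->
       (forall x : dom M, preceq M J x x) /\
       (forall x y z : dom M, preceq M J x y -> preceq M J y z -> preceq M J x z) /\
       (forall y : dom M, inK M J y -> forall x : dom M, preceq M J x y -> inK M J x) /\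
       (forall w : dom M, inK M J (iturn M (ie M) w))).
Proof.
  exists Jf. split; [|split].
  - Transparent Jf. unfold Jf, Kf, If, Qf, Af, Bf, Cf; simpl. intuition. Opaque Jf.
  - intros phi Hphi M HM rho.
    pose proof (ax1 M HM) as S1. pose proof (ax2 M HM) as S2.
    pose proof (ax3 M HM) as S3. pose proof (ax4 M HM) as S4.
    pose proof (ax5 M HM) as S5.
    assert (JK : forall d rho, sat M (scons d rho) Jf <-> Ks M d) by apply Jf_sem.
    destruct Hphi as [ -> | [ -> | [ -> | [ -> | -> ]]]]; simpl.
    + intros; apply S1.
    + intros; apply S2; auto.
    + intros d Hd. apply JK in Hd. split. apply S3. apply (K_Q M _ Hd).
    + intros; apply S4.
    + intros x Hx y Hy z Hz w Hw.
      apply JK in Hx; apply JK in Hy; apply JK in Hz; apply JK in Hw.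
      split.
      * intros H. destruct (proj2 (proj2 (K_Q M _ Hw)) _ _ _ H) as [u [[H1 H2]|[H1 H2]]];
          exists u; split.
        -- apply JK. apply (K_down M u w); [congruence|auto].
        -- left; auto.
        -- apply JK. apply (K_down M u y); [congruence|auto].
        -- right; auto.
      * intros [u [Hu [[H1 H2]|[H1 H2]]]].
        -- subst. rewrite (Q_assoc M _ (K_Q M _ Hw)). reflexivity.
        -- subst. rewrite (Q_assoc M _ (K_Q M _ Hy)). reflexivity.
  - intros M HM.
    pose proof (ax1 M HM) as S1. pose proof (ax2 M HM) as S2.
    pose proof (ax3 M HM) as S3. pose proof (ax4 M HM) as S4.
    pose proof (ax5 M HM) as S5.
    assert (JK : forall d, inK M Jf d <-> Ks M d) by (intros; apply Jf_sem).
    unfold preceq. split; [|split; [|split]].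
    + intros x. exists (ie M). split. apply JK, K_e; auto. rewrite S3; auto.
    + intros x y z [z1 [Hz1 ->]] [z2 [Hz2 ->]]. exists (icirc M z1 z2). split.
      * apply JK in Hz1; apply JK in Hz2. apply JK, K_comp; auto.
      * apply JK in Hz2. rewrite (Q_assoc M _ (K_Q M _ Hz2)). reflexivity.
    + intros y Hy x [z [Hz ->]]. apply JK in Hy; apply JK in Hz. apply JK.
      apply (K_down M x z); auto.
    + intros w. apply JK. apply K_succ; auto. apply K_e; auto.
Qed.
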